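(* Let $M\ge 2$ be an even integer, $N=2M+3$ (so $N=4n+3$ with $n\ge1$), and $s\in\mathbb{R}$. Let $H=H^N(s)=(h_1,\dots,h_N)$ be the Fibonacci-polynomial Huffman array defined in the context. Then its aperiodic auto-correlation $A_d=\sum_{i} h_i h_{i+d}$ (with $h_k=0$ for $k\notin\{1,\dots,N\}$), for $-(N-1)\le d\le N-1$, satisfies $A_d=0$ for all $0<|d|<N-1$, and $A_{N-1}=A_{-(N-1)}=-1$. That is, the auto-correlation is $[-1,0,\dots,0,A_0,0,\dots,0,-1]$.
   Context: Fibonacci polynomials: $F_0(s)=0$, $F_1(s)=1$, $F_{r+2}(s)=sF_{r+1}(s)+F_r(s)$ for all integers $r$ (extended to negative indices by the same recursion, so that $F_{-j}(s)=(-1)^{j+1}F_j(s)$). Write $F_j=F_j(s)$. For even $M\ge2$ and $N=2M+3$, the array $H^N(s)=(h_1,\dots,h_N)$ is defined by: $h_1=1$; $h_{1+j}=2sF_j$ for $j=1,\dots,M$; middle element $h_{M+2}=sF_{M+1}-2F_M$; $h_{M+2+j}=2sF_{-(M+1-j)}$ for $j=1,\dots,M$; $h_N=-1$. Equivalently $H^N(s)=2s\,[(2s)^{-1},F_1,\dots,F_M,F_{M+1}/2-F_M/s,F_{-M},\dots,F_{-1},-(2s)^{-1}]$. (E.g. for $s=1$, $M=6$: $[1,2,2,4,6,10,16,-3,-16,10,-6,4,-2,2,-1]$.) *)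

(* Defs.v *)
From Stdlib Require Import Reals Lra Lia ZArith.
Open Scope R_scope.

Fixpoint fibn (s : R) (n : nat) : R :=
  match n with
  | O => 0
  | S m => match m with
           | O => 1
           | S k => s * fibn s m + fibn s k
           end
  end.

(* Extension to all integer indices, via F_{-j} = (-1)^{j+1} F_j
   (this is exactly what the recursion extended backwards gives). *)
Definition fibz (s : R) (r : Z) : R :=
  if (0 <=? r)%Z then fibn s (Z.to_nat r)
  else (-1) ^ (S (Z.to_nat (- r))) * fibn s (Z.to_nat (- r)).

Definition huff (M : nat) (s : R) (k : Z) : R :=
  let m := Z.of_nat M in
  let N := (2 * m + 3)%Z in
  if (k =? 1)%Z then 1
  else if (andb (2 <=? k)%Z (k <=? m + 1)%Z) then 2 * s * fibz s (k - 1)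
  else if (k =? m + 2)%Z then s * fibz s (m + 1) - 2 * fibz s m
  else if (andb (m + 3 <=? k)%Z (k <=? N - 1)%Z) then
         2 * s * fibz s (- (m + 1 - (k - m - 2)))
  else if (k =? N)%Z then -1
  else 0.

Definition autocorr (M : nat) (s : R) (d : Z) : R :=
  sum_f_R0 (fun i => huff M s (Z.of_nat (S i)) * huff M s (Z.of_nat (S i) + d))
           (2 * M + 2).

(* Main.v *)
Require Import Defs.
From Stdlib Require Import Reals ZArith Arith Lia Lra.
Open Scope R_scope.

Ltac zsimp := repeat match goal with
 | |- context [(?a =? ?b)%Z] => first [rewrite (proj2 (Z.eqb_eq a b)) by lia | rewrite (proj2 (Z.eqb_neq a b)) by lia]
 | |- context [(?a <=? ?b)%Z] => first [rewrite (proj2 (Z.leb_le a b)) by lia | rewrite (proj2 (Z.leb_gt a b)) by lia]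
 end; cbn [andb].

Lemma fibn_SS s n : fibn s (S (S n)) = s * fibn s (S n) + fibn s n.
Proof. reflexivity. Qed.

Lemma fib_rec s r : fibz s (r+2) = s * fibz s (r+1) + fibz s r.
Proof.
  unfold fibz.
  destruct (Z_le_gt_dec 0 r) as [H|H].
  - zsimp. replace (Z.to_nat (r+2)) with (S (S (Z.to_nat r))) by lia.
    replace (Z.to_nat (r+1)) with (S (Z.to_nat r)) by lia. apply fibn_SS.
  - destruct (Z.eq_dec r (-1)) as [E|E]; [subst; simpl; ring|].
    destruct (Z.eq_dec r (-2)) as [E2|E2]; [subst; simpl; ring|].
    zsimp. remember (Z.to_nat (- r) - 3)%nat as q.
    replace (Z.to_nat (- r)) with (S (S (S q))) by lia.
    replace (Z.to_nat (- (r+1))) with (S (S q)) by lia.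
    replace (Z.to_nat (- (r+2))) with (S q) by lia.
    rewrite (fibn_SS s (S q)). cbn [pow]. ring.
Qed.

Lemma fib_rec' s a b c : b = (a+1)%Z -> c = (a+2)%Z -> fibz s c = s * fibz s b + fibz s a.
Proof. intros -> ->. apply fib_rec. Qed.

Lemma fibz_negnat s j : fibz s (- Z.of_nat j) = (-1)^(S j) * fibz s (Z.of_nat j).
Proof.
  unfold fibz. destruct j as [|j]; [simpl; ring|].
  zsimp. rewrite Z.opp_involutive, Nat2Z.id. ring.
Qed.

Lemma huff_out M s k : (k < 1 \/ k > 2*Z.of_nat M+3)%Z -> huff M s k = 0.
Proof. intros H. unfold huff; cbv zeta. destruct H; zsimp; reflexivity. Qed.
Lemma huff_1 M s : huff M s 1 = 1.
Proof. unfold huff; cbv zeta. zsimp. reflexivity. Qed.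
Lemma huff_fst M s k : (2 <= k <= Z.of_nat M+1)%Z -> huff M s k = 2*s*fibz s (k-1).
Proof. intros H. unfold huff; cbv zeta. zsimp. reflexivity. Qed.
Lemma huff_mid M s : huff M s (Z.of_nat M+2) = s * fibz s (Z.of_nat M+1) - 2 * fibz s (Z.of_nat M).
Proof. unfold huff; cbv zeta. zsimp. reflexivity. Qed.
Lemma huff_snd M s k : (Z.of_nat M+3 <= k <= 2*Z.of_nat M+2)%Z -> huff M s k = 2*s*fibz s (k-2*Z.of_nat M-3).
Proof. intros H. unfold huff; cbv zeta. zsimp. do 3 f_equal. ring. Qed.
Lemma huff_N M s : huff M s (2*Z.of_nat M+3) = -1.
Proof. unfold huff; cbv zeta. zsimp. reflexivity. Qed.

Definition indz (a b : Z) : R := if (a =? b)%Z then 1 else 0.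
Definition pk (s:R) (y:Z) : R := indz y 0 + s * indz y 1 - indz y 2.
Definition TT M s := s * fibz s (Z.of_nat M + 1) + 2 * fibz s (Z.of_nat M).
Definition EE M s k := pk s k - TT M s * pk s (k - Z.of_nat M - 1)
   - pk s (k - (2*Z.of_nat M + 3) + 1).

Lemma fibz_neg_m M s : Nat.Even M -> fibz s (- Z.of_nat M) = - fibz s (Z.of_nat M).
Proof. intros [q ->]. rewrite fibz_negnat. cbn [pow]. rewrite pow_1_even. ring. Qed.
Lemma fibz_neg_m1 M s : Nat.Even M -> fibz s (- (Z.of_nat M + 1)) = fibz s (Z.of_nat M+1).
Proof. intros [q ->]. replace (Z.of_nat (2*q) + 1)%Z with (Z.of_nat (S (2*q))) by lia.
  rewrite fibz_negnat. cbn [pow]. rewrite pow_1_even. ring. Qed.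

Lemma fibz1 s : fibz s 1 = 1. Proof. reflexivity. Qed.
Lemma fibz2 s : fibz s 2 = s. Proof. unfold fibz; simpl; ring. Qed.
Lemma fibzm1 s : fibz s (-1) = 1. Proof. unfold fibz; simpl; ring. Qed.
Lemma fibzm2 s : fibz s (-2) = -s. Proof. unfold fibz; simpl; ring. Qed.

Lemma E_spec M s k : (2 <= M)%nat -> Nat.Even M ->
  huff M s (k+1) - s * huff M s k - huff M s (k-1) = EE M s k.
Proof.
  intros HM HE. unfold EE, TT, pk, indz.
  set (m := Z.of_nat M) in *.
  assert (Hm : (2 <= m)%Z) by lia.
  destruct (Z_lt_le_dec k 0).
  { rewrite !huff_out by lia. zsimp; change (Z.of_nat M) with m. ring. }
  destruct (Z.eq_dec k 0). { subst. simpl (0+1)%Z. rewrite huff_1, !huff_out by lia. zsimp; change (Z.of_nat M) with m. ring. }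
  destruct (Z.eq_dec k 1). { subst. simpl (1+1)%Z. simpl (1-1)%Z. rewrite huff_1, (huff_fst _ _ 2) by lia.
     rewrite huff_out by lia. zsimp; change (Z.of_nat M) with m. simpl. rewrite ?fibz1, ?fibz2, ?fibzm1, ?fibzm2. ring. }
  destruct (Z.eq_dec k 2). { subst. simpl (2+1)%Z. simpl (2-1)%Z. rewrite huff_1.
     rewrite !huff_fst by lia. zsimp; change (Z.of_nat M) with m. simpl. rewrite ?fibz1, ?fibz2, ?fibzm1, ?fibzm2. ring. }
  destruct (Z_le_gt_dec k m).
  { rewrite !huff_fst by lia. zsimp; change (Z.of_nat M) with m.
    rewrite (fib_rec' s (k-1-1) (k-1) (k+1-1)) by lia. ring. }
  destruct (Z.eq_dec k (m+1)). { subst k. replace (m+1+1)%Z with (m+2)%Z by ring.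
     rewrite huff_mid. change (Z.of_nat M) with m. rewrite !huff_fst by lia. zsimp; change (Z.of_nat M) with m.
     replace (m+1-1)%Z with m by ring.
     change (Z.of_nat M) with m.
     rewrite (fib_rec' s (m-1) m (m+1)) by lia. ring. }
  destruct (Z.eq_dec k (m+2)). { subst k. replace (m+2-1)%Z with (m+1)%Z by ring.
     rewrite huff_mid. change (Z.of_nat M) with m. rewrite (huff_fst _ _ (m+1)), (huff_snd _ _ (m+2+1)) by lia. zsimp; change (Z.of_nat M) with m.
     replace (m+1-1)%Z with m by ring.
     replace (m+2+1-2*m-3)%Z with (-m)%Z by ring.
     unfold m; rewrite fibz_neg_m by auto. ring. }
  destruct (Z.eq_dec k (m+3)). { subst k. replace (m+3-1)%Z with (m+2)%Z by ring.
     rewrite huff_mid. change (Z.of_nat M) with m. rewrite !huff_snd by lia. zsimp; change (Z.of_nat M) with m.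
     replace (m+3-2*m-3)%Z with (-m)%Z by ring.
     rewrite (fib_rec' s (-(m+1)) (-m) (m+3+1-2*m-3)) by lia.
     unfold m; rewrite fibz_neg_m, fibz_neg_m1 by auto. ring. }
  destruct (Z_le_gt_dec k (2*m+1)).
  { rewrite !huff_snd by lia. zsimp; change (Z.of_nat M) with m.
    rewrite (fib_rec' s (k-1-2*m-3) (k-2*m-3) (k+1-2*m-3)) by lia. ring. }
  destruct (Z.eq_dec k (2*m+2)). { subst k. replace (2*m+2+1)%Z with (2*m+3)%Z by ring.
     rewrite huff_N, !huff_snd by lia. zsimp; change (Z.of_nat M) with m.
     replace (2*m+2-2*m-3)%Z with (-1)%Z by ring.
     replace (2*m+2-1-2*m-3)%Z with (-2)%Z by ring. simpl. rewrite ?fibz1, ?fibz2, ?fibzm1, ?fibzm2. ring. }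
  destruct (Z.eq_dec k (2*m+3)). { subst k. replace (2*m+3-1)%Z with (2*m+2)%Z by ring.
     rewrite huff_N, (huff_out _ _ (2*m+3+1)), huff_snd by lia. zsimp; change (Z.of_nat M) with m.
     replace (2*m+2-2*m-3)%Z with (-1)%Z by ring. simpl. rewrite ?fibz1, ?fibz2, ?fibzm1, ?fibzm2. ring. }
  destruct (Z.eq_dec k (2*m+4)). { subst k. replace (2*m+4-1)%Z with (2*m+3)%Z by ring.
     rewrite huff_N, !huff_out by lia. zsimp; change (Z.of_nat M) with m. ring. }
  rewrite !huff_out by lia. zsimp; change (Z.of_nat M) with m. ring.
Qed.

Lemma sum_lin (A B C : nat -> R) t n :
  sum_f_R0 (fun i => A i - t * B i - C i) n = sum_f_R0 A n - t * sum_f_R0 B n - sum_f_R0 C n.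
Proof. induction n; simpl; [ring| rewrite IHn; ring]. Qed.

Lemma sum_zero (A : nat -> R) n : (forall i, (i <= n)%nat -> A i = 0) -> sum_f_R0 A n = 0.
Proof. induction n; intros H; simpl. apply H; lia. rewrite IHn. rewrite (H (S n)) by lia. ring.
  intros; apply H; lia. Qed.

Lemma delta_sum (f : Z -> R) (x c : Z) n :
  sum_f_R0 (fun i => f (Z.of_nat (S i)) * indz (Z.of_nat (S i) + x)%Z c) n =
  if andb (1 <=? c - x)%Z (c - x <=? Z.of_nat (S n))%Z then f (c - x)%Z else 0.
Proof.
  induction n; cbn [sum_f_R0].
  - unfold indz. destruct (Z.eqb_spec (Z.of_nat 1 + x) c).
    + zsimp. replace (c - x)%Z with (Z.of_nat 1) by lia. ring.
    + destruct (andb (1 <=? c - x)%Z (c - x <=? Z.of_nat 1)%Z) eqn:E; [|ring].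
      apply andb_prop in E; destruct E as [E1 E2]; apply Z.leb_le in E1; apply Z.leb_le in E2; lia.
  - rewrite IHn. unfold indz.
    destruct (Z.eqb_spec (Z.of_nat (S (S n)) + x) c).
    + zsimp. replace (c - x)%Z with (Z.of_nat (S (S n))) by lia. ring.
    + destruct (Z_le_gt_dec 1 (c-x)); destruct (Z_le_gt_dec (c-x) (Z.of_nat (S n))); zsimp; try ring.
Qed.

Lemma delta_sum' (f : Z -> R) (x c : Z) n :
  (forall k, (k < 1 \/ k > Z.of_nat (S n))%Z -> f k = 0) ->
  sum_f_R0 (fun i => f (Z.of_nat (S i)) * indz (Z.of_nat (S i) + x)%Z c) n = f (c - x)%Z.
Proof.
  intros Hf. rewrite delta_sum.
  destruct (Z_le_gt_dec 1 (c-x)); destruct (Z_le_gt_dec (c-x) (Z.of_nat (S n))); zsimp; try ring;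
  rewrite Hf by lia; ring.
Qed.

Lemma sumP (f : Z -> R) s (x : Z) n :
  (forall k, (k < 1 \/ k > Z.of_nat (S n))%Z -> f k = 0) ->
  sum_f_R0 (fun i => f (Z.of_nat (S i)) * pk s (Z.of_nat (S i) + x)%Z) n =
  - (f (1 - x + 1)%Z - s * f (1 - x)%Z - f (1 - x - 1)%Z).
Proof.
  intros Hf.
  transitivity (sum_f_R0 (fun i => f (Z.of_nat (S i)) * indz (Z.of_nat (S i) + x)%Z 0
      - (-s) * (f (Z.of_nat (S i)) * indz (Z.of_nat (S i) + x)%Z 1)
      - f (Z.of_nat (S i)) * indz (Z.of_nat (S i) + x)%Z 2) n).
  { apply sum_eq; intros; unfold pk; ring. }
  rewrite sum_lin, !delta_sum' by auto.
  replace (1 - x + 1)%Z with (2 - x)%Z by ring. replace (1-x-1)%Z with (0-x)%Z by ring. ring.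
Qed.

Definition RR M s d := - EE M s (1 - d) + TT M s * EE M s (1 - (d - Z.of_nat M - 1))
   + EE M s (1 - (d - (2*Z.of_nat M + 3) + 1)).

Lemma hzero M s : forall k, (k < 1 \/ k > Z.of_nat (S (2*M+2)))%Z -> huff M s k = 0.
Proof. intros k Hk. apply huff_out. lia. Qed.

Lemma rec_id M s d : (2 <= M)%nat -> Nat.Even M ->
  autocorr M s (d+1) - s * autocorr M s d - autocorr M s (d-1) = RR M s d.
Proof.
  intros HM HE. unfold autocorr.
  rewrite <- sum_lin.
  transitivity (sum_f_R0 (fun i => huff M s (Z.of_nat (S i)) * pk s (Z.of_nat (S i) + d)%Z
     - TT M s * (huff M s (Z.of_nat (S i)) * pk s (Z.of_nat (S i) + (d - Z.of_nat M - 1))%Z)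
     - huff M s (Z.of_nat (S i)) * pk s (Z.of_nat (S i) + (d - (2*Z.of_nat M + 3) + 1))%Z) (2*M+2)).
  { apply sum_eq; intros i _.
    pose proof (E_spec M s (Z.of_nat (S i) + d) HM HE) as H. unfold EE in H.
    replace (Z.of_nat (S i) + d + 1)%Z with (Z.of_nat (S i) + (d + 1))%Z in H by ring.
    replace (Z.of_nat (S i) + d - 1)%Z with (Z.of_nat (S i) + (d - 1))%Z in H by ring.
    replace (Z.of_nat (S i) + (d - Z.of_nat M - 1))%Z with (Z.of_nat (S i) + d - Z.of_nat M - 1)%Z by ring.
    replace (Z.of_nat (S i) + (d - (2 * Z.of_nat M + 3) + 1))%Z
      with (Z.of_nat (S i) + d - (2 * Z.of_nat M + 3) + 1)%Z by ring.
    transitivity (huff M s (Z.of_nat (S i)) * (huff M s (Z.of_nat (S i) + (d+1))%Z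
       - s*huff M s (Z.of_nat (S i) + d)%Z - huff M s (Z.of_nat (S i) + (d-1))%Z)); [ring|].
    rewrite H. ring. }
  rewrite sum_lin, !sumP by apply hzero.
  unfold RR. rewrite <- !E_spec by auto. ring.
Qed.

Ltac try_val d v := let E := fresh in destruct (Z.eq_dec d v) as [E|E]; [rewrite E; zsimp; try ring|].

Lemma RR_pos M s d : (2 <= M)%nat -> (2 <= d)%Z ->
  RR M s d = - indz (d+1) (2*Z.of_nat M+2) - s * - indz d (2*Z.of_nat M+2) - - indz (d-1) (2*Z.of_nat M+2).
Proof.
  intros HM Hd. unfold RR, EE, pk, indz.
  set (m := Z.of_nat M) in *. assert (2 <= m)%Z by lia.
  try_val d m. try_val d (m+1)%Z. try_val d (m+2)%Z.
  try_val d (2*m+1)%Z. try_val d (2*m+2)%Z. try_val d (2*m+3)%Z.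
  zsimp. ring.
Qed.

Lemma RR_neg M s d : (2 <= M)%nat -> (d <= -2)%Z ->
  RR M s d = - indz (d+1) (-(2*Z.of_nat M+2)) - s * - indz d (-(2*Z.of_nat M+2)) - - indz (d-1) (-(2*Z.of_nat M+2)).
Proof.
  intros HM Hd. unfold RR, EE, pk, indz.
  set (m := Z.of_nat M) in *. assert (2 <= m)%Z by lia.
  try_val d (-m)%Z. try_val d (-m-1)%Z. try_val d (-m-2)%Z.
  try_val d (-(2*m+1))%Z. try_val d (-(2*m+2))%Z. try_val d (-(2*m+3))%Z.
  zsimp. ring.
Qed.

Lemma A_far M s d : (d >= 2*Z.of_nat M+3 \/ d <= -(2*Z.of_nat M+3))%Z -> autocorr M s d = 0.
Proof.
  intros Hd. unfold autocorr. apply sum_zero. intros i Hi.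
  rewrite (huff_out M s (Z.of_nat (S i) + d)) by lia. ring.
Qed.

Lemma pos_part M s (HM : (2 <= M)%nat) (HE : Nat.Even M) : forall k : nat, (k <= 2*M+2)%nat ->
  autocorr M s (2*Z.of_nat M+3 - Z.of_nat k) = - indz (2*Z.of_nat M+3 - Z.of_nat k) (2*Z.of_nat M+2) /\
  autocorr M s (2*Z.of_nat M+3 - Z.of_nat k + 1) = - indz (2*Z.of_nat M+3 - Z.of_nat k + 1) (2*Z.of_nat M+2).
Proof.
  induction k; intros Hk.
  - rewrite !A_far by lia. unfold indz. zsimp. split; ring.
  - destruct (IHk ltac:(lia)) as [H1 H2].
    set (d := (2*Z.of_nat M+3 - Z.of_nat k)%Z) in *.
    replace (2 * Z.of_nat M + 3 - Z.of_nat (S k))%Z with (d - 1)%Z by (unfold d; lia).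
    replace (d - 1 + 1)%Z with d by ring. split; [|exact H1].
    pose proof (rec_id M s d HM HE) as R. rewrite (RR_pos M s d HM) in R by (unfold d; lia).
    rewrite H1, H2 in R. lra.
Qed.

Lemma neg_part M s (HM : (2 <= M)%nat) (HE : Nat.Even M) : forall k : nat, (k <= 2*M+2)%nat ->
  autocorr M s (-(2*Z.of_nat M+3) + Z.of_nat k) = - indz (-(2*Z.of_nat M+3) + Z.of_nat k) (-(2*Z.of_nat M+2)) /\
  autocorr M s (-(2*Z.of_nat M+3) + Z.of_nat k - 1) = - indz (-(2*Z.of_nat M+3) + Z.of_nat k - 1) (-(2*Z.of_nat M+2)).
Proof.
  induction k; intros Hk.
  - rewrite !A_far by lia. unfold indz. zsimp. split; ring.
  - destruct (IHk ltac:(lia)) as [H1 H2].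
    set (d := (-(2*Z.of_nat M+3) + Z.of_nat k)%Z) in *.
    replace (-(2 * Z.of_nat M + 3) + Z.of_nat (S k))%Z with (d + 1)%Z by (unfold d; lia).
    replace (d + 1 - 1)%Z with d by ring. split; [|exact H1].
    pose proof (rec_id M s d HM HE) as R. rewrite (RR_neg M s d HM) in R by (unfold d; lia).
    rewrite H1, H2 in R. lra.
Qed.

Theorem mainTheorem1 (M : nat) (s : R) :
  (2 <= M)%nat -> Nat.Even M ->
  let N := Z.of_nat (2 * M + 3) in
  (forall d : Z, (0 < Z.abs d < N - 1)%Z -> autocorr M s d = 0) /\
  autocorr M s (N - 1) = -1 /\ autocorr M s (- (N - 1)) = -1.
Proof.
  intros HM HE N. unfold N. split; [|split].
  - intros d Hd. destruct (Z_lt_le_dec 0 d).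
    + destruct (pos_part M s HM HE (Z.to_nat (2*Z.of_nat M+3 - d)) ltac:(lia)) as [H _].
      replace (2 * Z.of_nat M + 3 - Z.of_nat (Z.to_nat (2 * Z.of_nat M + 3 - d)))%Z with d in H by lia.
      rewrite H. unfold indz. zsimp. ring.
    + destruct (neg_part M s HM HE (Z.to_nat (2*Z.of_nat M+3 + d)) ltac:(lia)) as [H _].
      replace (-(2 * Z.of_nat M + 3) + Z.of_nat (Z.to_nat (2 * Z.of_nat M + 3 + d)))%Z with d in H by lia.
      rewrite H. unfold indz. zsimp. ring.
  - destruct (pos_part M s HM HE 1 ltac:(lia)) as [H _].
    replace (Z.of_nat (2*M+3) - 1)%Z with (2 * Z.of_nat M + 3 - Z.of_nat 1)%Z by lia.
    rewrite H. unfold indz. zsimp. ring.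
  - destruct (neg_part M s HM HE 1 ltac:(lia)) as [H _].
    replace (- (Z.of_nat (2*M+3) - 1))%Z with (-(2 * Z.of_nat M + 3) + Z.of_nat 1)%Z by lia.
    rewrite H. unfold indz. zsimp. ring.
Qed.
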